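(* For all programs $P,S_1,S_2,Q,\gamma$: if the operational triples $\{|P|\}\ S_1\ \{|Q|\}$ and $\{|Q|\}\ S_2\ \{|\gamma|\}$ hold, then $\{|P|\}\ S_1;S_2\ \{|\gamma|\}$ holds.
   Context: Programs are statements of a sequential imperative language with a standard small-step operational semantics over program states. $\mathrm{behs}(P)$ is the set of pairs (initial state, final state) of finite terminating executions of $P$; $(s,u)\in\mathrm{behs}(P;Q)$ iff there is $t$ with $(s,t)\in\mathrm{behs}(P)$ and $(t,u)\in\mathrm{behs}(Q)$. The post-state set is $\mathrm{pst}(P)=\{t:\exists s,\ (s,t)\in\mathrm{behs}(P)\}$. The operational triple $\{|P|\}\ S\ \{|Q|\}$ is defined to mean $\mathrm{pst}(P;S)\subseteq\mathrm{pst}(Q)$. *)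

(* Defs.v *)
From Stdlib Require Import ZArith Relations.

Definition var := nat.
Definition state := var -> Z.
Definition aexp := state -> Z.
Definition bexp := state -> bool.

Inductive stmt : Type :=
| Skip : stmt
| Assign : var -> aexp -> stmt
| Seq : stmt -> stmt -> stmt
| If : bexp -> stmt -> stmt -> stmt
| While : bexp -> stmt -> stmt.

Definition update (s : state) (x : var) (v : Z) : state :=
  fun y => if Nat.eqb y x then v else s y.

Inductive step : stmt * state -> stmt * state -> Prop :=
| step_assign : forall x a s, step (Assign x a, s) (Skip, update s x (a s))
| step_seq_skip : forall Q s, step (Seq Skip Q, s) (Q, s)
| step_seq : forall P P' Q s s',
    step (P, s) (P', s') -> step (Seq P Q, s) (Seq P' Q, s')
| step_if_true : forall b P Q s, b s = true -> step (If b P Q, s) (P, s)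
| step_if_false : forall b P Q s, b s = false -> step (If b P Q, s) (Q, s)
| step_while : forall b P s,
    step (While b P, s) (If b (Seq P (While b P)) Skip, s).

Definition steps := clos_refl_trans _ step.

Definition behs (P : stmt) (s t : state) : Prop := steps (P, s) (Skip, t).

Definition pst (P : stmt) (t : state) : Prop := exists s, behs P s t.

Definition optriple (P S Q : stmt) : Prop :=
  forall t, pst (Seq P S) t -> pst Q t.

(* Main.v *)
Require Import Defs.
From Stdlib Require Import Relations.

Lemma seq_lift A A' B s s' :
  clos_refl_trans_1n _ step (A, s) (A', s') ->
  clos_refl_trans_1n _ step (Seq A B, s) (Seq A' B, s').
Proof.
  intro H. remember (A, s) as c1. remember (A', s') as c2.
  revert A s Heqc1.
  induction H; intros; subst.
  - inversion Heqc1; subst. constructor.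
  - destruct y as [A2 s2]. econstructor.
    + apply step_seq. exact H.
    + eapply IHclos_refl_trans_1n; eauto.
Qed.

Lemma seq_decomp A B s t :
  clos_refl_trans_1n _ step (Seq A B, s) (Skip, t) ->
  exists m, clos_refl_trans_1n _ step (A, s) (Skip, m) /\
            clos_refl_trans_1n _ step (B, m) (Skip, t).
Proof.
  intro H. remember (Seq A B, s) as c1. remember (Skip, t) as c2.
  revert A s Heqc1.
  induction H; intros; subst.
  - discriminate.
  - inversion H; subst.
    + exists s. split; [constructor | assumption].
    + destruct (IHclos_refl_trans_1n eq_refl P' s' eq_refl) as [m [H1 H2]].
      exists m. split; [econstructor; eauto | assumption].
Qed.

Lemma steps_1n c d : steps c d <-> clos_refl_trans_1n _ step c d.
Proof. split; [apply clos_rt_rt1n | apply clos_rt1n_rt]. Qed.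

Lemma trans1n c d e : clos_refl_trans_1n _ step c d -> clos_refl_trans_1n _ step d e ->
  clos_refl_trans_1n _ step c e.
Proof. intros. apply clos_rt_rt1n. eapply rt_trans; apply clos_rt1n_rt; eauto. Qed.

Lemma seq_comp A B s m t :
  clos_refl_trans_1n _ step (A, s) (Skip, m) ->
  clos_refl_trans_1n _ step (B, m) (Skip, t) ->
  clos_refl_trans_1n _ step (Seq A B, s) (Skip, t).
Proof.
  intros H1 H2. eapply trans1n. apply (seq_lift _ _ B _ _ H1).
  econstructor. apply step_seq_skip. exact H2.
Qed.

Theorem proposition8 (P S1 S2 Q gamma : stmt) :
  optriple P S1 Q -> optriple Q S2 gamma -> optriple P (Seq S1 S2) gamma.
Proof.
  unfold optriple, pst, behs. intros H1 H2 t [s Hs].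
  rewrite steps_1n in Hs.
  destruct (seq_decomp _ _ _ _ Hs) as [m1 [HP H12]].
  destruct (seq_decomp _ _ _ _ H12) as [m2 [HS1 HS2]].
  destruct (H1 m2) as [q Hq].
  { exists s. rewrite steps_1n. eapply seq_comp; eauto. }
  apply H2. exists q. rewrite steps_1n. rewrite steps_1n in Hq.
  eapply seq_comp; eauto.
Qed.
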